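(* Suppose A1–A3 hold and let $\{x_k\}$ be generated by Algorithm 1 with the Metropolis-based choice $$\nu_{k,l}=\sigma\exp\!\Big(-\max\{\theta,\ f(x_k+\alpha_k\beta^l d_k)-f(x_k)\}\,\ln(k+1)\Big)$$ for constants $\sigma>0$, $\theta>1$. Let $\epsilon>0$. If $T$ is a positive integer with $$T\ge 2\max\left\{\sigma\sum_{k=0}^{\infty}\frac{1}{(k+1)^\theta},\ f(x_0)-f_{low}\right\}\kappa_c^{-1}\epsilon^{-2},$$ then $\min_{k=0,\dots,T-1}\|\nabla f(x_k)\|\le\epsilon$.
   Context: Let $(X,\langle\cdot,\cdot\rangle)$ be a real Hilbert space with induced norm $\|\cdot\|$, and $f:X\to\mathbb{R}$ Fréchet differentiable with gradient $\nabla f$. Algorithm 1 (general non-monotone descent algorithm): parameters $x_0\in X$, $\alpha_0>0$, $\beta,\rho\in(0,1)$. For $k=0,1,2,\dots$: choose $d_k\in X$ with $\langle\nabla f(x_k),d_k\rangle<0$; then for $l=0,1,2,\dots$ choose a number $\nu_{k,l}\ge 0$ and test $$f(x_k+\alpha_k\beta^l d_k)\le f(x_k)+\rho\alpha_k\beta^l\langle\nabla f(x_k),d_k\rangle+\nu_{k,l};$$ let $l_k$ be the first $l$ for which this holds, set $\nu_k:=\nu_{k,l_k}$, $x_{k+1}=x_k+\alpha_k\beta^{l_k}d_k$ and $\alpha_{k+1}=\alpha_k\beta^{l_k-1}$. It is assumed the algorithm generates infinite sequences (all $l_k$ finite). Assumptions: A1: $\nabla f$ is Lipschitz continuous with constant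 $L>0$. A2: there is $f_{low}\in\mathbb{R}$ with $f(x)\ge f_{low}$ for all $x\in X$. A3: there are constants $c_1,c_2>0$ with $\langle\nabla f(x_k),d_k\rangle\le -c_1\|\nabla f(x_k)\|^2$ and $\|d_k\|\le c_2\|\nabla f(x_k)\|$ for all $k$. Constant: $\kappa_c=\min\left\{\rho\beta\alpha_0c_1,\ \frac{2\beta\rho(1-\rho)c_1^2}{Lc_2^2}\right\}$. *)

(* Defs.v *)
From Stdlib Require Import Reals Lra.
Open Scope R_scope.

Record Hilbert := {
  hcar :> Type;
  vzero : hcar;
  vadd : hcar -> hcar -> hcar;
  vscal : R -> hcar -> hcar;
  inner : hcar -> hcar -> R;
  vadd_assoc : forall x y z, vadd x (vadd y z) = vadd (vadd x y) z;
  vadd_comm : forall x y, vadd x y = vadd y x;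
  vadd_0 : forall x, vadd vzero x = x;
  vadd_opp : forall x, vadd x (vscal (-1) x) = vzero;
  vscal_1 : forall x, vscal 1 x = x;
  vscal_assoc : forall a b x, vscal a (vscal b x) = vscal (a * b) x;
  vscal_distr_v : forall a x y, vscal a (vadd x y) = vadd (vscal a x) (vscal a y);
  vscal_distr_s : forall a b x, vscal (a + b) x = vadd (vscal a x) (vscal b x);
  inner_sym : forall x y, inner x y = inner y x;
  inner_lin : forall a b x y z,
      inner (vadd (vscal a x) (vscal b y)) z = a * inner x z + b * inner y z;
  inner_pos : forall x, 0 <= inner x x;
  inner_def : forall x, inner x x = 0 -> x = vzero;
  hnorm_complete : forall u : nat -> hcar,
      (forall eps, 0 < eps -> exists N, forall m n, (N <= m)%nat -> (N <= n)%nat ->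
          sqrt (inner (vadd (u m) (vscal (-1) (u n))) (vadd (u m) (vscal (-1) (u n)))) < eps) ->
      exists l, forall eps, 0 < eps -> exists N, forall n, (N <= n)%nat ->
          sqrt (inner (vadd (u n) (vscal (-1) l)) (vadd (u n) (vscal (-1) l))) < eps
}.

Arguments vzero {h}.
Arguments vadd {h}.
Arguments vscal {h}.
Arguments inner {h}.

Definition vsub {X : Hilbert} (x y : X) : X := vadd x (vscal (-1) y).
Definition hnorm {X : Hilbert} (x : X) : R := sqrt (inner x x).

Definition frechet_gradient {X : Hilbert} (f : X -> R) (grad : X -> X) : Prop :=
  forall x eps, 0 < eps -> exists delta, 0 < delta /\
    forall h : X, hnorm h < delta ->
      Rabs (f (vadd x h) - f x - inner (grad x) h) <= eps * hnorm h.

Definition nm_test {X : Hilbert} (f : X -> R) (grad : X -> X) (rho : R)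
    (xk dk : X) (step nu : R) : Prop :=
  f (vadd xk (vscal step dk)) <= f xk + rho * step * inner (grad xk) dk + nu.

Definition kappa_c (rho beta alpha0 c1 c2 L : R) : R :=
  Rmin (rho * beta * alpha0 * c1) (2 * beta * rho * (1 - rho) * c1 ^ 2 / (L * c2 ^ 2)).

(* Main.v *)
Require Import Defs.
From Stdlib Require Import Reals ZArith Lra Lia Classical.
Open Scope R_scope.



Lemma vadd_0r {X : Hilbert} (u : X) : vadd u vzero = u.
Proof. rewrite (vadd_comm X); apply (vadd_0 X). Qed.

Lemma vscal_0 {X : Hilbert} (u : X) : vscal 0 u = vzero.
Proof.
  pose (w := vscal 0 u). change (w = vzero).
  assert (E : w = vadd w w) by (unfold w; rewrite <- (vscal_distr_s X); f_equal; ring).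
  rewrite <- (vadd_opp X w). transitivity (vadd (vadd w w) (vscal (-1) w)); [| rewrite <- E; reflexivity]. rewrite <- (vadd_assoc X), (vadd_opp X), vadd_0r. reflexivity.
Qed.

Lemma inner_scal_l {X : Hilbert} (a : R) (u w : X) : inner (vscal a u) w = a * inner u w.
Proof.
  pose proof (inner_lin X a 0 u u w) as H. rewrite vscal_0, vadd_0r in H. lra.
Qed.

Lemma inner_add_l {X : Hilbert} (u v w : X) : inner (vadd u v) w = inner u w + inner v w.
Proof. pose proof (inner_lin X 1 1 u v w) as H. rewrite !(vscal_1 X) in H. lra. Qed.

Lemma inner_scal_r {X : Hilbert} (a : R) (u w : X) : inner w (vscal a u) = a * inner w u.
Proof. rewrite (inner_sym X), inner_scal_l, (inner_sym X); reflexivity. Qed.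

Lemma inner_add_r {X : Hilbert} (u v w : X) : inner w (vadd u v) = inner w u + inner w v.
Proof. rewrite (inner_sym X), inner_add_l, ((inner_sym X) u), ((inner_sym X) v); reflexivity. Qed.

Lemma inner_0_r {X : Hilbert} (w : X) : inner w vzero = 0.
Proof. rewrite <- (vscal_0 w), inner_scal_r. ring. Qed.

Lemma hnorm_scal {X : Hilbert} (a : R) (u : X) : hnorm (vscal a u) = Rabs a * hnorm u.
Proof.
  unfold hnorm. rewrite inner_scal_l, inner_scal_r, <- Rmult_assoc.
  rewrite sqrt_mult; [| nra | apply inner_pos].
  replace (a*a) with (Rsqr a) by (unfold Rsqr; ring). rewrite sqrt_Rsqr_abs. reflexivity.
Qed.

Lemma hnorm_nonneg {X : Hilbert} (u : X) : 0 <= hnorm u.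
Proof. apply sqrt_pos. Qed.

Lemma CS {X : Hilbert} (u v : X) : inner u v <= hnorm u * hnorm v.
Proof.
  pose (A := inner u u). pose (B := inner v v). pose (C := inner u v).
  assert (HA : 0 <= A) by apply inner_pos.
  assert (HB : 0 <= B) by apply inner_pos.
  assert (Q : forall t, 0 <= A + 2 * t * C + t * t * B).
  { intro t. pose proof (inner_pos X (vadd u (vscal t v))) as P.
    rewrite inner_add_l, !inner_add_r, !inner_scal_l, !inner_scal_r in P.
    rewrite ((inner_sym X) v u) in P. unfold A, B, C. nra. }
  assert (C2 : C * C <= A * B).
  { destruct (Req_dec B 0) as [B0|B0].
    - apply (inner_def X) in B0. unfold C. rewrite B0, inner_0_r. nra.
    - specialize (Q (- C / B)).
      assert (0 < B) by lra.
      replace (A + 2 * (- C / B) * C + - C / B * (- C / B) * B) with ((A*B - C*C)/B) in Q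
        by (field; lra).
      apply Rmult_le_compat_r with (r := B) in Q; [|lra].
      unfold Rdiv in Q. rewrite Rmult_assoc, Rinv_l, Rmult_0_l in Q; lra. }
  unfold hnorm. change (C <= sqrt A * sqrt B). rewrite <- sqrt_mult by assumption.
  destruct (Rle_dec C 0). { pose proof (sqrt_pos (A*B)); lra. }
  rewrite <- (sqrt_square C) by lra. apply sqrt_le_1; nra.
Qed.

Lemma vsub_shift {X : Hilbert} (u w : X) : vsub (vadd u w) u = w.
Proof.
  unfold vsub. rewrite ((vadd_comm X) u w), <- (vadd_assoc X), (vadd_opp X), vadd_0r. reflexivity.
Qed.

Lemma inner_sub_l {X : Hilbert} (u v w : X) : inner (vsub u v) w = inner u w - inner v w.
Proof. unfold vsub. rewrite inner_add_l, inner_scal_l. ring. Qed.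

Lemma vadd_split {X : Hilbert} (u w : X) (s h : R) : vadd u (vscal (s + h) w) = vadd (vadd u (vscal s w)) (vscal h w).
Proof. rewrite (vscal_distr_s X), (vadd_assoc X). reflexivity. Qed.





Lemma phi_deriv (X : Hilbert) (f : X -> R) (grad : X -> X) (Hd : frechet_gradient f grad) (x d : X) s :
  derivable_pt_lim (fun s => f (vadd x (vscal s d))) s (inner (grad (vadd x (vscal s d))) d).
Proof.
  intros eps Heps.
  set (y := vadd x (vscal s d)). set (N := hnorm d).
  assert (HN : 0 <= N) by apply hnorm_nonneg.
  destruct (Hd y (eps / (N+1))) as [delta [Hdl Hdel]].
  { apply Rdiv_lt_0_compat; lra. }
  assert (Hp : 0 < delta / (N+1)) by (apply Rdiv_lt_0_compat; lra).
  exists (mkposreal _ Hp). simpl. intros h hnz hlt.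
  rewrite vadd_split. fold y.
  assert (Hh : 0 < Rabs h) by (apply Rabs_pos_lt; auto).
  specialize (Hdel (vscal h d)). rewrite hnorm_scal in Hdel. fold N in Hdel.
  assert (Hlt : Rabs h * N < delta).
  { apply Rmult_lt_compat_r with (r := N+1) in hlt; [|lra].
    unfold Rdiv in hlt. rewrite Rmult_assoc, Rinv_l, Rmult_1_r in hlt by lra. nra. }
  specialize (Hdel Hlt). rewrite inner_scal_r in Hdel.
  set (E := f (vadd y (vscal h d)) - f y - h * inner (grad y) d) in Hdel.
  assert (HE : Rabs E < eps * Rabs h).
  { assert (eps / (N+1) * (Rabs h * N) < eps * Rabs h).
    { unfold Rdiv. replace (eps * / (N + 1) * (Rabs h * N)) with (eps * Rabs h * (N / (N+1))) by (field; lra).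
      assert (N / (N+1) < 1) by (apply (Rmult_lt_reg_r (N+1)); [lra|]; unfold Rdiv; rewrite Rmult_assoc, Rinv_l by lra; lra).
      assert (0 < eps * Rabs h) by nra. nra. }
    lra. }
  replace ((f (vadd y (vscal h d)) - f y) / h - inner (grad y) d) with (E / h) by (unfold E; field; auto).
  unfold Rdiv. rewrite Rabs_mult, Rabs_inv.
  apply (Rmult_lt_reg_r (Rabs h)); auto.
  rewrite Rmult_assoc, Rinv_l by lra. lra.
Qed.


Lemma descent (X : Hilbert) (f : X -> R) (grad : X -> X) (Hd : frechet_gradient f grad) (L : R) (HLip : forall u v : X, hnorm (vsub (grad u) (grad v)) <= L * hnorm (vsub u v)) (x d : X) t : 0 < t ->
  f (vadd x (vscal t d)) <= f x + t * inner (grad x) d + L / 2 * t ^ 2 * hnorm d ^ 2.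
Proof.
  intro Ht.
  set (G0 := inner (grad x) d). set (N := hnorm d). set (K := L / 2 * N ^ 2).
  set (phi := fun s => f (vadd x (vscal s d))).
  set (f2 := (mult_real_fct G0 id + mult_real_fct K (id * id))%F).
  assert (P2 : forall s, derivable_pt_lim f2 s (G0 * 1 + K * (1 * id s + id s * 1))).
  { intro s. apply derivable_pt_lim_plus; apply derivable_pt_lim_scal.
    apply derivable_pt_lim_id. apply derivable_pt_lim_mult; apply derivable_pt_lim_id. }
  set (psi := (phi - f2)%F).
  assert (Pp : forall s, derivable_pt_lim psi s
     (inner (grad (vadd x (vscal s d))) d - (G0 * 1 + K * (1 * id s + id s * 1)))).
  { intro s. apply derivable_pt_lim_minus; [apply (phi_deriv X f grad Hd) | apply P2]. }
  pose (pr := fun s => exist (fun l => derivable_pt_lim psi s l) _ (Pp s) : derivable_pt psi s).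
  destruct (MVT_cor1 psi 0 t pr Ht) as [c [Hc [Hc0 Hct]]].
  unfold derive_pt, pr in Hc. simpl in Hc. unfold id in Hc.
  assert (Hder : inner (grad (vadd x (vscal c d))) d - (G0 * 1 + K * (1 * c + c * 1)) <= 0).
  { pose proof (CS (vsub (grad (vadd x (vscal c d))) (grad x)) d) as C1.
    rewrite inner_sub_l in C1. fold G0 N in C1.
    pose proof (HLip (vadd x (vscal c d)) x) as C2.
    rewrite vsub_shift, hnorm_scal, Rabs_right in C2 by lra. fold N in C2.
    assert (0 <= N) by apply hnorm_nonneg.
    unfold K. nra. }
  assert (psi t <= psi 0) by nra.
  unfold psi, minus_fct, phi, f2, plus_fct, mult_real_fct, mult_fct, id in H.
  rewrite vscal_0, vadd_0r in H. unfold K in H. fold G0 N. lra.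
Qed.



Lemma ln_nonneg y : 1 <= y -> 0 <= ln y.
Proof.
  intro H. destruct (Req_dec y 1) as [E|E]. subst; rewrite ln_1; lra.
  rewrite <- ln_1. apply Rlt_le, ln_increasing; lra.
Qed.

Lemma exp_mono a b : a <= b -> exp a <= exp b.
Proof.
  intro H. destruct (Req_dec a b) as [E|E]. subst; lra.
  apply Rlt_le, exp_increasing; lra.
Qed.

Fixpoint sm (u : nat -> R) (n : nat) : R :=
  match n with O => 0 | S n => sm u n + u n end.

Lemma sm_sum u n : sm u (S n) = sum_f_R0 u n.
Proof. induction n. simpl; ring. change (sm u (S (S n))) with (sm u (S n) + u (S n)). rewrite IHn. reflexivity. Qed.

Theorem theorem5
  (X : Hilbert) (f : X -> R) (grad : X -> X)
  (Hdiff : frechet_gradient f grad)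
  (x0 : X) (alpha0 beta rho : R)
  (Halpha0 : 0 < alpha0) (Hbeta : 0 < beta < 1) (Hrho : 0 < rho < 1)
  (sigma theta : R) (Hsigma : 0 < sigma) (Htheta : 1 < theta)
  (x : nat -> X) (alpha : nat -> R) (d : nat -> X) (l : nat -> nat)
  (nu : nat -> nat -> R)
  (Hx0 : x 0%nat = x0) (Ha0 : alpha 0%nat = alpha0)
  (Hdesc : forall k, inner (grad (x k)) (d k) < 0)
  (Hnu : forall k j, nu k j =
      sigma * exp (- (Rmax theta (f (vadd (x k) (vscal (alpha k * beta ^ j) (d k))) - f (x k)))
                   * ln (INR k + 1)))
  (Hl_ok : forall k, nm_test f grad rho (x k) (d k) (alpha k * beta ^ (l k)) (nu k (l k)))
  (Hl_first : forall k j, (j < l k)%nat ->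
      ~ nm_test f grad rho (x k) (d k) (alpha k * beta ^ j) (nu k j))
  (Hxs : forall k, x (S k) = vadd (x k) (vscal (alpha k * beta ^ (l k)) (d k)))
  (Has : forall k, alpha (S k) = alpha k * powerRZ beta (Z.of_nat (l k) - 1))
  (L : R) (HL : 0 < L)
  (HLip : forall u v : X, hnorm (vsub (grad u) (grad v)) <= L * hnorm (vsub u v))
  (flow : R) (Hflow : forall u : X, flow <= f u)
  (c1 c2 : R) (Hc1 : 0 < c1) (Hc2 : 0 < c2)
  (HA3a : forall k, inner (grad (x k)) (d k) <= - c1 * (hnorm (grad (x k))) ^ 2)
  (HA3b : forall k, hnorm (d k) <= c2 * hnorm (grad (x k)))
  (Ssum : R)
  (HSsum : Un_cv (fun n => sum_f_R0 (fun k => / Rpower (INR k + 1) theta) n) Ssum)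
  (eps : R) (Heps : 0 < eps)
  (T : nat) (HT : (1 <= T)%nat)
  (HTbound : INR T >= 2 * Rmax (sigma * Ssum) (f x0 - flow)
                        * / kappa_c rho beta alpha0 c1 c2 L * / eps ^ 2) :
  exists k, (k < T)%nat /\ hnorm (grad (x k)) <= eps.
Proof.
  set (B := 2 * (1 - rho) * c1 / (L * c2 ^ 2)).
  assert (HB : 0 < B).
  { unfold B. apply Rdiv_lt_0_compat. nra. apply Rmult_lt_0_compat; [lra| apply pow_lt; lra]. }
  assert (Hsmall : forall k s v, 0 < s <= B -> 0 <= v -> nm_test f grad rho (x k) (d k) s v).
  { intros k s v [Hs0 HsB] Hv. unfold nm_test.
    pose proof (descent X f grad Hdiff L HLip (x k) (d k) s Hs0) as Dk.
    set (g := inner (grad (x k)) (d k)) in *. set (G := hnorm (grad (x k))) in *.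
    set (N := hnorm (d k)) in *.
    assert (HN0 : 0 <= N) by apply hnorm_nonneg.
    assert (HG0 : 0 <= G) by apply hnorm_nonneg.
    pose proof (HA3a k) as A1. pose proof (HA3b k) as A2. fold g G N in A1, A2.
    assert (HN2 : N ^ 2 <= c2 ^ 2 * G ^ 2) by nra.
    assert (HsL : L * c2 ^ 2 * s <= 2 * (1 - rho) * c1).
    { unfold B in HsB. apply Rmult_le_compat_l with (r := L * c2 ^ 2) in HsB; [|nra].
      replace (L * c2 ^ 2 * (2 * (1 - rho) * c1 / (L * c2 ^ 2))) with (2 * (1 - rho) * c1) in HsB
        by (field; split; nra). nra. }
    assert (Q1 : L / 2 * s ^ 2 * N ^ 2 <= (1 - rho) * c1 * s * G ^ 2).
    { assert (L / 2 * s ^ 2 * N ^ 2 <= L / 2 * s ^ 2 * (c2 ^ 2 * G ^ 2)).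
      { apply Rmult_le_compat_l; [|exact HN2]. nra. }
      assert (L / 2 * s ^ 2 * (c2 ^ 2 * G ^ 2) = (L * c2 ^ 2 * s) * (s * G ^ 2 / 2)) by (field).
      assert ((L * c2 ^ 2 * s) * (s * G ^ 2 / 2) <= (2 * (1 - rho) * c1) * (s * G ^ 2 / 2)).
      { apply Rmult_le_compat_r; [|exact HsL]. nra. }
      nra. }
    assert (Q2 : (1 - rho) * s * g <= - (1 - rho) * c1 * s * G ^ 2).
    { assert (0 <= (1 - rho) * s) by nra. nra. }
    nra. }
  assert (Hnupos : forall k j, 0 <= nu k j).
  { intros k j. rewrite Hnu. apply Rlt_le, Rmult_lt_0_compat; [lra|apply exp_pos]. }
  assert (Hbl : forall n, 0 < beta ^ n) by (intro; apply pow_lt; lra).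
  assert (Hastep : forall k, alpha (S k) = alpha k * beta ^ (l k) / beta).
  { intro k. rewrite Has. unfold Rdiv. rewrite Rmult_assoc. f_equal.
    replace (Z.of_nat (l k) - 1)%Z with (Z.of_nat (l k) + (-1))%Z by lia.
    rewrite powerRZ_add by lra. rewrite <- pow_powerRZ. simpl. rewrite Rmult_1_r. reflexivity. }
  assert (Htk : forall k, 0 < alpha k -> alpha k * beta ^ (l k) >= beta * Rmin (alpha k) B).
  { intros k Hak. destruct (l k) as [|j] eqn:El.
    - simpl. assert (Rmin (alpha k) B <= alpha k) by apply Rmin_l. nra.
    - assert (Hj : (j < l k)%nat) by lia.
      pose proof (Hl_first k j Hj) as NF.
      assert (alpha k * beta ^ j > B).
      { destruct (Rlt_le_dec B (alpha k * beta ^ j)) as [h|h]; [lra|].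
        exfalso. apply NF. apply Hsmall; [split; [apply Rmult_lt_0_compat; auto|exact h] | apply Hnupos]. }
      assert (Rmin (alpha k) B <= B) by apply Rmin_r.
      simpl. nra. }
  set (m := Rmin alpha0 B).
  assert (Hm : 0 < m) by (unfold m, Rmin; destruct Rle_dec; lra).
  assert (Hal : forall k, 0 < alpha k /\ alpha k >= m).
  { induction k as [|k [IH1 IH2]].
    - rewrite Ha0. split; [lra|]. unfold m. pose proof (Rmin_l alpha0 B). lra.
    - pose proof (Htk k IH1) as T1. rewrite Hastep.
      assert (Hmin : Rmin (alpha k) B >= m).
      { unfold Rmin at 1. destruct Rle_dec; [lra|]. unfold m. pose proof (Rmin_r alpha0 B). lra. }
      pose proof (Hbl (l k)).
      split.
      + apply Rdiv_lt_0_compat; [apply Rmult_lt_0_compat|]; lra.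
      + apply Rle_ge. apply (Rmult_le_reg_r beta); [lra|].
        unfold Rdiv. rewrite Rmult_assoc, Rinv_l, Rmult_1_r by lra. nra. }
  set (kap := kappa_c rho beta alpha0 c1 c2 L).
  assert (Hkap : kap <= rho * c1 * beta * m).
  { assert (Em : m = alpha0 \/ m = B) by (unfold m, Rmin; destruct Rle_dec; auto).
    unfold kap, kappa_c. destruct Em as [E|E]; rewrite E.
    - pose proof (Rmin_l (rho * beta * alpha0 * c1) (2 * beta * rho * (1 - rho) * c1 ^ 2 / (L * c2 ^ 2))). nra.
    - pose proof (Rmin_r (rho * beta * alpha0 * c1) (2 * beta * rho * (1 - rho) * c1 ^ 2 / (L * c2 ^ 2))).
      replace (rho * c1 * beta * B) with (2 * beta * rho * (1 - rho) * c1 ^ 2 / (L * c2 ^ 2))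
        by (unfold B; field; split; nra). lra. }
  assert (Hkap0 : 0 < kap).
  { unfold kap, kappa_c, Rmin. destruct Rle_dec.
    - apply Rmult_lt_0_compat; [|lra]. apply Rmult_lt_0_compat; [|lra]. nra.
    - apply Rdiv_lt_0_compat. apply Rmult_lt_0_compat; [|apply pow_lt; lra].
      assert (0 < 2 * beta * rho) by nra. assert (0 < 1 - rho) by lra. nra.
      apply Rmult_lt_0_compat; [lra| apply pow_lt; lra]. }
  set (w := fun k : nat => / Rpower (INR k + 1) theta).
  set (G2 := fun k : nat => hnorm (grad (x k)) ^ 2).
  assert (Hstep : forall k, f (x (S k)) <= f (x k) - kap * G2 k + sigma * w k).
  { intro k. pose proof (Hl_ok k) as OK. unfold nm_test in OK. rewrite <- Hxs in OK.
    destruct (Hal k) as [Hak Hakm]. pose proof (Htk k Hak) as T1.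
    assert (Hmin : Rmin (alpha k) B >= m).
    { unfold Rmin at 1. destruct Rle_dec; [lra|]. unfold m. pose proof (Rmin_r alpha0 B). lra. }
    set (t := alpha k * beta ^ l k) in *.
    assert (Htm : t >= beta * m) by nra.
    assert (Hnub : nu k (l k) <= sigma * w k).
    { rewrite Hnu. unfold w, Rpower. rewrite <- exp_Ropp.
      apply Rmult_le_compat_l; [lra|]. apply exp_mono.
      assert (0 <= ln (INR k + 1)) by (apply ln_nonneg; pose proof (pos_INR k); lra).
      match goal with |- - (Rmax ?a ?b) * _ <= _ => pose proof (Rmax_l a b) end. nra. }
    pose proof (HA3a k) as A1. unfold G2.
    set (G := hnorm (grad (x k))) in *. set (g := inner (grad (x k)) (d k)) in *.
    assert (G ^ 2 >= 0) by (apply Rle_ge, pow2_ge_0).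
    assert (rho * t * g <= - (rho * c1 * t) * G ^ 2).
    { assert (0 < rho * t) by (apply Rmult_lt_0_compat; [lra| unfold t; apply Rmult_lt_0_compat; auto]). nra. }
    assert (kap * G ^ 2 <= rho * c1 * t * G ^ 2).
    { apply Rmult_le_compat_r; [lra|]. assert (0 <= rho * c1 * (t - beta * m)) by (apply Rmult_le_pos; nra). nra. }
    lra. }
  assert (Hsum : forall n, f (x n) <= f x0 - kap * sm G2 n + sigma * sm w n).
  { induction n. simpl. rewrite Hx0. lra. simpl. pose proof (Hstep n). lra. }
  assert (Hwpos : forall k, 0 < w k) by (intro; unfold w, Rpower; apply Rinv_0_lt_compat, exp_pos).
  assert (Hgrow : Un_growing (fun n => sum_f_R0 (fun k => / Rpower (INR k + 1) theta) n)).
  { intro k. rewrite tech5. pose proof (Hwpos (S k)) as Hw. unfold w in Hw. lra. }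
  assert (HwS : forall n, sm w n <= Ssum).
  { intro n. destruct n.
    - simpl. pose proof (growing_ineq _ _ Hgrow HSsum 0) as H0. change (w 0%nat <= Ssum) in H0.
      pose proof (Hwpos 0%nat) as Hw. lra.
    - rewrite sm_sum. apply (growing_ineq _ _ Hgrow HSsum). }
  destruct (classic (exists k, (k < T)%nat /\ hnorm (grad (x k)) <= eps)) as [Ex|NEx]; [exact Ex|].
  exfalso.
  assert (Hall : forall k, (k < T)%nat -> G2 k > eps ^ 2).
  { intros k Hk. destruct (Rle_dec (hnorm (grad (x k))) eps) as [h|h].
    - exfalso. apply NEx. exists k; auto.
    - unfold G2. assert (eps < hnorm (grad (x k))) by lra. nra. }
  assert (Hge : forall n, (n <= T)%nat -> sm G2 n >= INR n * eps ^ 2).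
  { induction n; intro Hn. simpl. lra. simpl sm. rewrite S_INR.
    pose proof (Hall n ltac:(lia)). pose proof (IHn ltac:(lia)). lra. }
  assert (HgtT : sm G2 T > INR T * eps ^ 2).
  { destruct T as [|T']; [lia|]. simpl sm. rewrite S_INR.
    pose proof (Hall T' ltac:(lia)). pose proof (Hge T' ltac:(lia)). lra. }
  set (M := Rmax (sigma * Ssum) (f x0 - flow)) in *.
  assert (HTk : INR T * (kap * eps ^ 2) >= 2 * M).
  { assert (0 < kap * eps ^ 2) by (apply Rmult_lt_0_compat; [lra| apply pow_lt; lra]).
    replace (2 * M) with ((2 * M * / kap * / eps ^ 2) * (kap * eps ^ 2))
      by (field; repeat split; lra).
    fold kap in HTbound. apply Rle_ge, Rmult_le_compat_r; lra. }
  pose proof (Rmax_l (sigma * Ssum) (f x0 - flow)). pose proof (Rmax_r (sigma * Ssum) (f x0 - flow)).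
  fold M in H, H0.
  pose proof (Hsum T). pose proof (HwS T). pose proof (Hflow (x T)).
  assert (kap * sm G2 T > kap * (INR T * eps ^ 2)) by (apply Rmult_lt_compat_l; lra).
  nra.
Qed.
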